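(* Let $X$ be a shift space over $\mathcal{A}$, $\sigma:\mathcal{A}^*\to\mathcal{B}^*$ an injective and strongly left proper morphism with first letter $\ell$, $Y$ the image of $X$ under $\sigma$, and $v\in\mathcal{L}(X)$ bispecial. If $(s,p)\in\mathcal{T}^-_v(\sigma)\times\mathcal{T}^+_v(\sigma)$ is such that $u=s\sigma(v)p$ is an extended image of $v$, then the extension graph $\mathcal{E}_Y(u)$ is the image of $\mathcal{E}_{X,s,p}(v)$ under the graph morphism $\varphi_{v,s,p}:\mathcal{E}_{X,s,p}(v)\to\mathcal{E}_Y(u)$ which, for every child $s'$ of $s$ in $\overline{\mathcal{T}^-_v(\sigma)}$, maps all left vertices belonging to $E^-_{X,s'}(v)$ to the left vertex labeled by the letter $a\in\mathcal{B}$ such that $s'\in\mathcal{B}^*as$, and, for every child $p'$ of $p$ in $\overline{\mathcal{T}^+_v(\sigma)}$, maps all right vertices belonging to $E^+_{X,p'}(v)$ to the right vertex labeled by the letter $b\in\mathcal{B}$ such that $p'\in pb\mathcal{B}^*$. In particular, if $\mathcal{T}^-_v(\sigma)=\{s_0\}$ and $\mathcal{T}^+_v(\sigma)=\{p_0\}$, then $v$ has a unique bispecial extended image $u$ and the associated morphism $\varphi_{v,s_0,p_0}$ is an isomorphism.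
   Context: A shift space over $\mathcal{A}$ is a closed shift-invariant $X\subseteq\mathcal{A}^{\mathbb{Z}}$ in which all letters occur, with factor set $\mathcal{L}(X)$. For $w\in\mathcal{L}(X)$: $E^-_X(w)=\{a:aw\in\mathcal{L}(X)\}$, $E^+_X(w)=\{b:wb\in\mathcal{L}(X)\}$, $E_X(w)=\{(a,b):awb\in\mathcal{L}(X)\}$; the extension graph $\mathcal{E}_X(w)$ is the bipartite graph on left vertices $E^-_X(w)$ and right vertices $E^+_X(w)$ with edge set $E_X(w)$; $w$ is bispecial if both $E^\pm_X(w)$ have at least two elements. Morphisms are non-erasing; $\sigma$ is strongly left proper with first letter $\ell$ if every $\sigma(a)$ begins with $\ell$ and contains $\ell$ exactly once. The image of $X$ under $\sigma$ is $Y=\{S^k\sigma(x):x\in X,0\le k<|\sigma(x_0)|\}$. Fact (antecedents): for every non-empty $u\in\mathcal{L}(Y)$ containing $\ell$ there is a unique triple $(s,v,p)$, $v\in\mathcal{L}(X)$, $u=s\sigma(v)p$, such that for some $(a,b)\in E_X(v)$, $s$ is a proper suffix of $\sigma(a)$ and $p$ a non-empty prefix of $\sigma(b)$; then $u$ is an extended image of $v$. Notation: $s(a_1,a_2)$, $p(b_1,b_2)$ are the longest common suffix of $\sigma(a_1),\sigma(a_2)$ and longest common prefix of $\sigma(b_1),\sigma(b_2)$. $\mathcal{T}^-_v(\sigma)=\{s(a_1,a_2):a_1\ne a_2\in E^-_X(v)\}$, $\mathcal{T}^+_v(\sigma)=\{p(b_1,b_2):b_1\ne b_2\in E^+_X(v)\}$,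 $\overline{\mathcal{T}^-_v(\sigma)}=\mathcal{T}^-_v(\sigma)\cup\sigma(E^-_X(v))$, $\overline{\mathcal{T}^+_v(\sigma)}=\mathcal{T}^+_v(\sigma)\cup\sigma(E^+_X(v))\ell$. The suffix order (resp. prefix order) makes $\overline{\mathcal{T}^-_v(\sigma)}$ (resp. $\overline{\mathcal{T}^+_v(\sigma)}$) a rooted tree whose root $s_0$ (resp. $p_0$) is its shortest word; a child of a node $s$ is an element $s'$ having $s$ as a proper suffix with no element strictly in between (similarly with prefixes). For words $x,y$: $E^-_{X,x}(v)=\{a\in E^-_X(v):\sigma(a)\in\mathcal{B}^*x\}$, $E^+_{X,y}(v)=\{b\in E^+_X(v):\sigma(b)\ell\in y\mathcal{B}^*\}$, $E_{X,x,y}(v)=E_X(v)\cap(E^-_{X,x}(v)\times E^+_{X,y}(v))$, and $\mathcal{E}_{X,x,y}(v)$ is the subgraph of $\mathcal{E}_X(v)$ with edge set $E_{X,x,y}(v)$ and vertices those incident to these edges. *)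

(* Defs.v *)
From mathcomp Require Import all_boot all_order all_algebra.
Set Implicit Arguments. Unset Strict Implicit. Unset Printing Implicit Defensive.
Import GRing.Theory Num.Theory.

Definition window (T : Type) (x : int -> T) (i : int) (n : nat) : seq T :=
  [seq x (i + k%:Z)%R | k <- iota 0 n].

Definition factor_of (T : Type) (w : seq T) (x : int -> T) : Prop :=
  exists i : int, w = window x i (size w).

Definition shiftS (T : Type) (x : int -> T) : int -> T := fun i => x (i + 1)%R.

Definition lang (T : Type) (X : (int -> T) -> Prop) (w : seq T) : Prop :=
  exists x, X x /\ factor_of w x.

(* closed (product topology), shift-invariant (S(X) = X), all letters occur *)
Definition shift_space (T : finType) (X : (int -> T) -> Prop) : Prop :=
  [/\ (forall x, X x -> X (shiftS x)),
      (forall x, X x -> exists y, X y /\ shiftS y = x),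
      (forall x, (forall n : nat, exists y, X y /\
            window y (- n%:Z)%R n.*2.+1 = window x (- n%:Z)%R n.*2.+1) -> X x)
    & (forall a : T, lang X [:: a])].

Definition morph (A B : Type) (sigma : A -> seq B) (w : seq A) : seq B :=
  flatten (map sigma w).

Definition strongly_left_proper (A : Type) (B : eqType) (sigma : A -> seq B) (l : B) :=
  forall a, (exists t, sigma a = l :: t) /\ count_mem l (sigma a) = 1%N.

(* Y = { S^k sigma(x) : x in X, 0 <= k < |sigma(x_0)| }, where sigma(x) is the
   bi-infinite word ... sigma(x_{-1}) . sigma(x_0) sigma(x_1) ... with sigma(x_0)
   starting at position 0.  y = S^k sigma(x) is characterised by: for every n, the
   image sigma(x_{-n} ... x_n) occurs in y at position -k - |sigma(x_{-n}...x_{-1})|. *)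
Definition imageY (A B : Type) (X : (int -> A) -> Prop) (sigma : A -> seq B)
  (y : int -> B) : Prop :=
  exists x, X x /\ exists k : nat, (k < size (sigma (x 0%R)))%N /\
    forall n : nat,
      window y (- (k + size (morph sigma (window x (- n%:Z)%R n)))%:Z)%R
               (size (morph sigma (window x (- n%:Z)%R n.*2.+1)))
      = morph sigma (window x (- n%:Z)%R n.*2.+1).

Definition Em (T : Type) (X : (int -> T) -> Prop) (w : seq T) (a : T) := lang X (a :: w).
Definition Ep (T : Type) (X : (int -> T) -> Prop) (w : seq T) (b : T) := lang X (rcons w b).
Definition Eext (T : Type) (X : (int -> T) -> Prop) (w : seq T) (a b : T) :=
  lang X (a :: rcons w b).

Definition bispecial (T : eqType) (X : (int -> T) -> Prop) (w : seq T) : Prop :=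
  [/\ lang X w,
      (exists a1 a2, a1 != a2 /\ Em X w a1 /\ Em X w a2)
    & (exists b1 b2, b1 != b2 /\ Ep X w b1 /\ Ep X w b2)].

Fixpoint lcp (T : eqType) (s t : seq T) : seq T :=
  match s, t with
  | x :: s', y :: t' => if x == y then x :: lcp s' t' else [::]
  | _, _ => [::]
  end.

Definition lcs (T : eqType) (s t : seq T) : seq T := rev (lcp (rev s) (rev t)).

Definition proper_suffix (T : eqType) (s t : seq T) := suffix s t && (s != t).
Definition proper_prefix (T : eqType) (s t : seq T) := prefix s t && (s != t).

Section Trees.
Variables (A B : finType) (X : (int -> A) -> Prop) (sigma : A -> seq B) (l : B)
          (v : seq A).

Definition Tm (s : seq B) : Prop :=
  exists a1 a2, a1 != a2 /\ Em X v a1 /\ Em X v a2 /\ s = lcs (sigma a1) (sigma a2).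
Definition Tp (p : seq B) : Prop :=
  exists b1 b2, b1 != b2 /\ Ep X v b1 /\ Ep X v b2 /\ p = lcp (sigma b1) (sigma b2).

Definition Tbm (s : seq B) : Prop := Tm s \/ exists a, Em X v a /\ s = sigma a.
Definition Tbp (p : seq B) : Prop := Tp p \/ exists b, Ep X v b /\ p = rcons (sigma b) l.

Definition child_m (s s' : seq B) : Prop :=
  [/\ Tbm s', proper_suffix s s' &
      ~ exists t, [/\ Tbm t, proper_suffix s t & proper_suffix t s']].
Definition child_p (p p' : seq B) : Prop :=
  [/\ Tbp p', proper_prefix p p' &
      ~ exists t, [/\ Tbp t, proper_prefix p t & proper_prefix t p']].

Definition Emx (x : seq B) (a : A) : Prop := Em X v a /\ suffix x (sigma a).
Definition Epy (y : seq B) (b : A) : Prop := Ep X v b /\ prefix y (rcons (sigma b) l).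
Definition Exy (x y : seq B) (a b : A) : Prop := [/\ Eext X v a b, Emx x a & Epy y b].
Definition leftV (x y : seq B) (a : A) : Prop := exists b, Exy x y a b.
Definition rightV (x y : seq B) (b : A) : Prop := exists a, Exy x y a b.

Definition is_ext_image (s p : seq B) : Prop :=
  exists a b, [/\ Eext X v a b, proper_suffix s (sigma a), p != [::] & prefix p (sigma b)].

Definition ext_image_of (u : seq B) : Prop :=
  lang (imageY X sigma) u /\
  exists s p, is_ext_image s p /\ u = s ++ morph sigma v ++ p.

(* phiL/phiR is (a well-defined realisation of) the map phi_{v,s,p}: every vertex of
   E_{X,s,p}(v) lies in E^-_{X,s'}(v) (resp. E^+_{X,p'}(v)) for a child s' of s
   (resp. p' of p), and is sent to the letter c with s' in B^* c s
   (resp. d with p' in p d B^* ). *)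
Definition phi_spec (s p : seq B) (phiL phiR : A -> B) : Prop :=
  [/\ (forall a, leftV s p a -> exists s', child_m s s' /\ Emx s' a),
      (forall s' a, child_m s s' -> Emx s' a -> leftV s p a -> suffix (phiL a :: s) s'),
      (forall b, rightV s p b -> exists p', child_p p p' /\ Epy p' b)
    & (forall p' b, child_p p p' -> Epy p' b -> rightV s p b ->
         prefix (rcons p (phiR b)) p')].

Definition image_graph (s p : seq B) (phiL phiR : A -> B) (u : seq B) : Prop :=
  [/\ (forall c, Em (imageY X sigma) u c <-> exists a, leftV s p a /\ phiL a = c),
      (forall d, Ep (imageY X sigma) u d <-> exists b, rightV s p b /\ phiR b = d)
    & (forall c d, Eext (imageY X sigma) u c d <->
         exists a b, [/\ Exy s p a b, phiL a = c & phiR b = d])].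

Definition graph_iso (s p : seq B) (phiL phiR : A -> B) (u : seq B) : Prop :=
  [/\ image_graph s p phiL phiR u,
      (forall a1 a2, leftV s p a1 -> leftV s p a2 -> phiL a1 = phiL a2 -> a1 = a2),
      (forall b1 b2, rightV s p b1 -> rightV s p b2 -> phiR b1 = phiR b2 -> b1 = b2)
    & (forall a b, leftV s p a -> rightV s p b ->
         Eext (imageY X sigma) u (phiL a) (phiR b) -> Exy s p a b)].

End Trees.

(* Main.v *)
Require Import Defs.
From mathcomp Require Import all_boot all_order all_algebra zify.
From Stdlib Require Import Classical.
Set Implicit Arguments. Unset Strict Implicit. Unset Printing Implicit Defensive.
Import GRing.Theory Num.Theory.


Section Words.
Variable T : eqType.
Implicit Types s t x y : seq T.

Lemma lcp_prefixl s t : prefix (lcp s t) s.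
Proof.
elim: s t => [|a s IH] [|b t] //=; case: eqP => [->|_] //=.
by rewrite eqxx IH.
Qed.

Lemma lcp_prefixr s t : prefix (lcp s t) t.
Proof.
elim: s t => [|a s IH] [|b t] //=; case: eqP => [->|_] //=.
by rewrite eqxx IH.
Qed.

Lemma lcp_max (r s t : seq T) : prefix r s -> prefix r t -> prefix r (lcp s t).
Proof.
elim: r s t => [|c r IH] [|a s] [|b t] //=; rewrite ?prefix0s //.
move=> /andP[/eqP <- H1] /andP[/eqP <- H2]; rewrite eqxx /= eqxx /=.
exact: IH.
Qed.

Lemma lcp_nomore t (d : T) x y : prefix (t ++ [:: d]) x -> prefix (t ++ [:: d]) y ->
  lcp x y = t -> False.
Proof.
move=> H1 H2 E; have := size_prefix (lcp_max H1 H2); rewrite E size_cat /=.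
by rewrite addn1 ltnn.
Qed.

Lemma lcs_suffixl s t : suffix (lcs s t) s.
Proof. by rewrite /suffix /lcs revK lcp_prefixl. Qed.

Lemma lcs_suffixr s t : suffix (lcs s t) t.
Proof. by rewrite /suffix /lcs revK lcp_prefixr. Qed.

Lemma lcs_max (r s t : seq T) : suffix r s -> suffix r t -> suffix r (lcs s t).
Proof. rewrite /suffix /lcs revK; exact: lcp_max. Qed.

Lemma lcs_nomore t (d : T) x y : suffix (d :: t) x -> suffix (d :: t) y ->
  lcs x y = t -> False.
Proof.
move=> H1 H2 E; have := size_suffix (lcs_max H1 H2); rewrite E /=.
by rewrite ltnn.
Qed.

Lemma notin_prefix (c : T) x y (T' Q : seq T) : x ++ c :: T' = y ++ Q -> c \notin y ->
  exists y', x = y ++ y'.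
Proof.
elim: y x => [|d y IH] x /=; first by exists x.
case: x => [|e x] /=.
  by case=> -> _; rewrite inE eqxx.
case=> -> E; rewrite inE negb_or => /andP[_ Hy].
by have [y' ->] := IH _ E Hy; exists y'.
Qed.

Lemma prefix_small (R A0 B0 : seq T) : prefix R (A0 ++ B0) -> size R <= size A0 -> prefix R A0.
Proof.
rewrite !prefixE take_cat; case: ltnP => [//|H1] H2 H3.
have E : size R = size A0 by apply/eqP; rewrite eqn_leq H1 H3.
by move: H2; rewrite E subnn take0 cats0 take_size.
Qed.

Lemma prefix_cmp s t x : prefix s x -> prefix t x -> size s <= size t -> prefix s t.
Proof.
rewrite !prefixE => /eqP E1 /eqP E2 H.
by rewrite -E2 take_takel // E1.
Qed.

Lemma suffix_cmp s t x : suffix s x -> suffix t x -> size s <= size t -> suffix s t.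
Proof. rewrite /suffix => H1 H2 H; apply: prefix_cmp H1 H2 _; by rewrite !size_rev. Qed.

Lemma proper_suffixE (s s' : seq T) : proper_suffix s s' -> exists r c, s' = r ++ c :: s.
Proof.
case/andP => /suffixP [r0 ->] Hne.
case/lastP: r0 Hne => [|r c] Hne; first by rewrite eqxx in Hne.
by exists r, c; rewrite cat_rcons.
Qed.

Lemma proper_prefixE (p p' : seq T) : proper_prefix p p' -> exists c r, p' = p ++ c :: r.
Proof.
case/andP => /prefixP [r0 ->] Hne.
case: r0 Hne => [|c r] Hne; first by rewrite cats0 eqxx in Hne.
by exists c, r.
Qed.

End Words.

Section Win.
Variable T : Type.

Lemma size_window (x : int -> T) i n : size (window x i n) = n.
Proof. by rewrite size_map size_iota. Qed.

Lemma window_cat (x : int -> T) i m n :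
  window x i (m + n) = window x i m ++ window x (i + m%:Z)%R n.
Proof.
rewrite /window iotaD map_cat; congr (_ ++ _).
rewrite add0n -[in iota m n](addn0 m) iotaDl -map_comp; apply: eq_map => k /=.
by congr x; rewrite PoszD addrA.
Qed.

Lemma window_cons (x : int -> T) i n :
  window x i n.+1 = x i :: window x (i + 1)%R n.
Proof. by have := window_cat x i 1 n; rewrite add1n => ->; rewrite /window /= addr0. Qed.

Lemma window_rcons (x : int -> T) i n :
  window x i n.+1 = rcons (window x i n) (x (i + n%:Z)%R).
Proof. by have := window_cat x i n 1; rewrite addn1 => ->; rewrite /window /= addr0 cats1. Qed.

Lemma cat_inj (a b c d : seq T) : size a = size c -> a ++ b = c ++ d -> a = c /\ b = d.
Proof.
move=> Hs E; split.
  have h1 := take_size_cat b (erefl (size a)).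
  by rewrite E Hs take_size_cat in h1.
have h1 := drop_size_cat b (erefl (size a)).
by rewrite E Hs drop_size_cat in h1.
Qed.

Lemma subwin (y : int -> T) i W1 W2 W3 :
  window y i (size (W1 ++ W2 ++ W3)) = W1 ++ W2 ++ W3 ->
  window y (i + (size W1)%:Z)%R (size W2) = W2.
Proof.
rewrite !size_cat !window_cat => E.
have [_ E2] := cat_inj (size_window _ _ _) E.
by have [-> _] := cat_inj (size_window _ _ _) E2.
Qed.

End Win.


Section LangGen.
Variables (T : Type) (X : (int -> T) -> Prop).

Lemma lang_factor (u1 w u2 : seq T) : lang X (u1 ++ w ++ u2) -> lang X w.
Proof.
case=> x [Xx [i E]]; exists x; split=> //; exists (i + (size u1)%:Z)%R.
by rewrite (subwin (esym E)).
Qed.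

Lemma lang_extL (w : seq T) : lang X w -> exists a, lang X (a :: w).
Proof.
case=> x [Xx [i E]]; exists (x (i - 1)%R); exists x; split=> //; exists (i - 1)%R.
by rewrite /= window_cons subrK -E.
Qed.

Lemma lang_extR (w : seq T) : lang X w -> exists b, lang X (rcons w b).
Proof.
case=> x [Xx [i E]]; exists (x (i + (size w)%:Z)%R); exists x; split=> //; exists i.
by rewrite size_rcons window_rcons -E.
Qed.

End LangGen.

Lemma window1 (T : Type) (x : int -> T) i : window x i 1 = [:: x i].
Proof. by rewrite /window /= addr0. Qed.

Section Sig.
Variables (A B : finType) (X : (int -> A) -> Prop) (sigma : A -> seq B) (l : B).
Hypotheses (HX : shift_space X) (Hinj : injective (morph sigma))
  (Hslp : strongly_left_proper sigma l).

Local Notation mo := (morph sigma).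
Implicit Types x : int -> A.

Lemma morph_cat u w : mo (u ++ w) = mo u ++ mo w.
Proof. by rewrite /morph map_cat flatten_cat. Qed.
Lemma morph_cons a w : mo (a :: w) = sigma a ++ mo w.
Proof. by []. Qed.
Lemma morph_nil : mo [::] = [::].
Proof. by []. Qed.
Lemma morph1 a : mo [:: a] = sigma a.
Proof. by rewrite /morph /= cats0. Qed.
Lemma morph_rcons w a : mo (rcons w a) = mo w ++ sigma a.
Proof. by rewrite -cats1 morph_cat morph1. Qed.

Lemma sig_shape a : exists t, sigma a = l :: t /\ l \notin t.
Proof.
have [[t E] C] := Hslp a; exists t; split=> //; move: C; rewrite E /= eqxx.
by move=> /eqP; rewrite add1n eqSS => /eqP /count_memPn.
Qed.

Lemma sig_inj a b : sigma a = sigma b -> a = b.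
Proof.
move=> E; have : [:: a] = [:: b] by apply: Hinj; rewrite !morph1 E.
by case.
Qed.

Lemma size_morph_ge w : size w <= size (mo w).
Proof.
elim: w => // a w IH; rewrite morph_cons size_cat.
have [t [-> _]] := sig_shape a; rewrite /=; lia.
Qed.

Lemma morph_startl w t : exists R, mo w ++ l :: t = l :: R.
Proof.
case: w => [|a w]; first by exists t.
have [ta [E _]] := sig_shape a; rewrite morph_cons E /=; eexists; reflexivity.
Qed.

Lemma align z P R : mo z = P ++ l :: R ->
  exists z1 z2, [/\ z = z1 ++ z2, mo z1 = P & mo z2 = l :: R].
Proof.
elim: z P => [|a z IH] P.
  by rewrite morph_nil; case: P.
case: P => [|c P] E; first by exists [::], (a :: z).
have [ta [Ea Hta]] := sig_shape a; rewrite morph_cons Ea /= in E.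
case: E => Ec E'; subst c.
have [y' Ey'] := notin_prefix (esym E') Hta.
rewrite Ey' -catA in E'.
move/eqP: E'; rewrite eqseq_cat // => /andP[_ /eqP E2].
have [z1 [z2 [-> E1 E3]]] := IH _ E2.
by exists (a :: z1), z2; split; rewrite // morph_cons Ea E1 Ey'.
Qed.

Lemma shift_fwd x n : X x -> exists x', X x' /\ forall t, x' t = x (t + n%:Z)%R.
Proof.
move=> Xx; elim: n => [|n [x' [Xx' Hx']]].
  by exists x; split=> // t; rewrite addr0.
exists (shiftS x'); split; first by case: HX => H _ _ _; exact: H.
move=> t; rewrite /shiftS Hx'; congr x; lia.
Qed.

Lemma shift_bwd x n : X x -> exists x', X x' /\ forall t, x' t = x (t - n%:Z)%R.
Proof.
move=> Xx; elim: n => [|n [x' [Xx' Hx']]].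
  by exists x; split=> // t; rewrite subr0.
case: HX => _ H _ _; have [y [Xy Ey]] := H _ Xx'.
exists y; split=> // t.
have -> : y t = shiftS y (t - 1)%R by rewrite /shiftS subrK.
rewrite Ey Hx'; congr x; lia.
Qed.

Lemma shift_any x i : X x -> exists x', X x' /\ forall t, x' t = x (t + i)%R.
Proof.
move=> Xx; case: i => n.
  exact: shift_fwd.
have [x' [Xx' Hx']] := shift_bwd n.+1 Xx; exists x'; split=> // t.
Qed.


Definition FF x M := mo (window x (- M%:Z)%R M.*2.+1).
Definition OO x M := size (mo (window x (- M%:Z)%R M)).
Definition GG x M (j : int) := nth l (FF x M) (absz ((OO x M)%:Z + j)%R).
Definition inr x M (j : int) :=
  (0 <= (OO x M)%:Z + j)%R && ((OO x M)%:Z + j < (size (FF x M))%:Z)%R.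
Definition yy x (j : int) := GG x (absz j) j.

Lemma FF_rec x M : FF x M.+1 =
  sigma (x (- (M.+1)%:Z)%R) ++ FF x M ++ sigma (x ((M.+1)%:Z)%R).
Proof.
have e : (M.+1.*2.+1 = (1 + M.*2.+1) + 1)%N by rewrite doubleS add1n addn1.
rewrite /FF e !window_cat !morph_cat !window1 !morph1 -catA.
congr (sigma (x _) ++ mo (window x _ _) ++ sigma (x _)); lia.
Qed.

Lemma OO_rec x M : OO x M.+1 = (size (sigma (x (- (M.+1)%:Z)%R)) + OO x M)%N.
Proof.
rewrite /OO window_cons morph_cons size_cat.
congr (_ + size (mo (window x _ _)))%N; lia.
Qed.

Lemma size_FF x M : size (FF x M) = (OO x M + size (mo (window x 0 M.+1)))%N.
Proof.
rewrite /FF /OO (_ : M.*2.+1 = M + M.+1)%N; last lia.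
rewrite window_cat morph_cat size_cat.
congr (_ + size (mo (window x _ _)))%N; lia.
Qed.

Lemma OO_ge x M : (M <= OO x M)%N.
Proof. by have := size_morph_ge (window x (- M%:Z)%R M); rewrite size_window. Qed.

Lemma right_ge x M : (size (sigma (x 0%R)) + M <= size (mo (window x 0 M.+1)))%N.
Proof.
rewrite window_cons morph_cons size_cat leq_add2l.
by have := size_morph_ge (window x (0 + 1)%R M); rewrite size_window.
Qed.

Lemma inr_step x M j : inr x M j -> inr x M.+1 j /\ GG x M.+1 j = GG x M j.
Proof.
rewrite /inr /GG FF_rec OO_rec.
move: (FF x M) (OO x M) (sigma (x (- (M.+1)%:Z)%R)) (sigma (x ((M.+1)%:Z)%R)) => F O e f.
rewrite !size_cat => /andP [H1 H2]; split.
  apply/andP; split; lia.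
rewrite (_ : absz (((size e + O)%N)%:Z + j)%R = size e + absz (O%:Z + j)%R)%N; last lia.
rewrite nth_cat ltnNge leq_addr /= addKn nth_cat.
have -> : (absz (O%:Z + j)%R < size F)%N by lia.
by [].
Qed.

Lemma inr_iter x M j : inr x M j -> forall d, inr x (M + d) j /\ GG x (M + d) j = GG x M j.
Proof.
move=> H; elim=> [|d [H1 H2]]; first by rewrite addn0.
have [H3 H4] := inr_step H1; rewrite addnS; split=> //; by rewrite H4.
Qed.

Lemma inr_agree x M N j : inr x M j -> inr x N j -> GG x M j = GG x N j.
Proof.
move=> HM HN; case: (leqP M N) => H.
  by rewrite -(subnKC H); have [_ ->] := inr_iter HM (N - M).
by rewrite -(subnKC (ltnW H)); have [_ ->] := inr_iter HN (M - N).
Qed.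

Lemma inr_abs x j : inr x (absz j) j.
Proof.
have h1 := OO_ge x (absz j); have h2 := right_ge x (absz j); have h3 := size_FF x (absz j).
have h4 : (0 < size (sigma (x 0%R)))%N by have [t [-> _]] := sig_shape (x 0%R).
rewrite /inr; apply/andP; split; lia.
Qed.

Lemma yy_win x n :
  window (yy x) (- (0 + OO x n)%:Z)%R (size (FF x n)) = FF x n.
Proof.
apply: (@eq_from_nth _ l); first by rewrite size_window.
move=> k; rewrite size_window => Hk.
rewrite /window (nth_map 0%N) ?size_iota // nth_iota // add0n /yy.
have Hin : inr x n (- (0 + OO x n)%:Z + k%:Z)%R.
  rewrite /inr; apply/andP; split; lia.
rewrite (inr_agree (inr_abs _ _) Hin) /GG; congr nth; lia.
Qed.

Lemma imageY_yy x : X x -> imageY X sigma (yy x).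
Proof.
move=> Xx; exists x; split=> //; exists 0%N; split.
  by have [t [-> _]] := sig_shape (x 0).
move=> n; exact: yy_win.
Qed.

Lemma langC z : lang X z -> lang (imageY X sigma) (mo z).
Proof.
case=> x [Xx [i E]]; have [x' [Xx' Hx']] := shift_any i Xx.
set m := size z in E.
have Ez : z = window x' 0 m.
  rewrite {1}E /window; apply: eq_map => k /=; rewrite Hx'; congr x; lia.
exists (yy x'); split; first exact: imageY_yy.
exists 0%R.
have W := yy_win x' m.
have eF : FF x' m = mo (window x' (- m%:Z)%R m) ++ mo z ++ sigma (x' (m%:Z)%R).
  rewrite /FF (_ : (m.*2.+1 = m + (m + 1))%N); last lia.
  rewrite window_cat window_cat !morph_cat window1 morph1.
  rewrite (_ : (- m%:Z + m%:Z = 0)%R); last lia.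
  by rewrite add0r -Ez.
rewrite eF in W; have := subwin W.
rewrite (_ : (- (0 + OO x' m)%:Z + (size (mo (window x' (- m%:Z) m)))%:Z = 0)%R).
  by move=> ->.
rewrite /OO; lia.
Qed.

Lemma langD w : lang (imageY X sigma) w ->
  exists z pre post, lang X z /\ mo z = pre ++ w ++ post.
Proof.
case=> y [[x [Xx [k [Hk Hn]]]] [i Ew]].
set n := (absz i + size w)%N.
have W := Hn n.
change (window y (- (k + OO x n)%:Z)%R (size (FF x n)) = FF x n) in W.
have b1 := OO_ge x n; have b2 := size_FF x n; have b3 := right_ge x n.
set F := FF x n in W b2.
set d := absz (i + (k + OO x n)%:Z)%R.
have hn : n = (absz i + size w)%N by [].
have hd : (d + size w <= size F)%N.
  rewrite /d; lia.
have eF : F = take d F ++ take (size w) (drop d F) ++ drop (size w) (drop d F).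
  by rewrite !cat_take_drop.
rewrite eF in W; have := subwin W.
rewrite size_takel; last lia.
rewrite size_takel; last by rewrite size_drop; lia.
rewrite (_ : (- (k + OO x n)%:Z + d%:Z = i)%R); last by rewrite /d; lia.
rewrite -Ew => Ew'.
exists (window x (- n%:Z)%R n.*2.+1), (take d F), (drop (size w) (drop d F)).
split; first by exists x; split=> //; exists (- n%:Z)%R; rewrite size_window.
by change (F = take d F ++ w ++ drop (size w) (drop d F)); rewrite {1}eF -Ew'.
Qed.

Lemma parse v (s p' L R : seq B) : (size L <= 1)%N -> (size R <= 1)%N -> l \notin s -> l \notin p' ->
  lang (imageY X sigma) (L ++ s ++ mo v ++ (l :: p') ++ R) ->
  exists a b, [/\ Eext X v a b, suffix (L ++ s) (sigma a)
                & prefix ((l :: p') ++ R) (rcons (sigma b) l)].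
Proof.
move=> HL HR Hs Hp /langD [z [pre [post [Lz Ez]]]].
have [e1 Le1] := lang_extL Lz; have [e2 Le2] := lang_extR Le1.
set Z := rcons (e1 :: z) e2 in Le2.
have [R1 ER1] := morph_startl v (p' ++ R ++ post ++ sigma e2).
have EZ : mo Z = (sigma e1 ++ pre ++ L ++ s) ++ l :: R1.
  rewrite -ER1 /Z morph_rcons morph_cons Ez.
  by rewrite -!catA.
have [z1 [z2 [EZ12 Ez1 Ez2]]] := align EZ.
rewrite -ER1 in Ez2.
have [z3 [z4 [Ez34 Ez3 Ez4]]] := align Ez2.
have ev := Hinj Ez3; subst z3 z2; clear Ez2.
case: z4 Ez4 EZ12 => [|b z5] Ez4 EZ12; first by rewrite morph_nil in Ez4.
rewrite morph_cons in Ez4.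
case: z5 Ez4 EZ12 => [|e z6] Ez4 EZ12.
  have : rcons (e1 :: z) e2 = rcons (z1 ++ v) b by rewrite -/Z EZ12 -cats1 -catA.
  move/rcons_inj => [_ eb]; subst b.
  by move/(congr1 size): Ez4; rewrite /= !size_cat /=; lia.
rewrite morph_cons in Ez4.
have [tb [Eb Htb]] := sig_shape b; have [te [Ee Hte]] := sig_shape e.
rewrite Eb Ee /= in Ez4; case: Ez4 => Ez4.
have [y' Ey'] := notin_prefix Ez4 Hp.
rewrite Ey' -catA in Ez4.
have [_ Ez5] := cat_inj (erefl (size p')) Ez4.
have HR' : prefix R (y' ++ [:: l]).
  apply: (@prefix_small _ _ _ (te ++ mo z6)); last by rewrite size_cat /=; lia.
  by apply/prefixP; exists (post ++ sigma e2); rewrite -catA /= -Ez5.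
case/lastP: z1 Ez1 EZ12 => [|z7 a] Ez1 EZ12.
  by move: Ez1; rewrite morph_nil; have [t1 [-> _]] := sig_shape e1.
rewrite morph_rcons in Ez1.
have [ta [Ea Hta]] := sig_shape a.
move/(congr1 rev): Ez1; rewrite Ea rev_cat rev_cons -cats1 -catA /= !rev_cat -!catA => Ez1.
have Hs' : l \notin rev s by rewrite mem_rev.
have [y2 Ey2] := notin_prefix Ez1 Hs'.
rewrite Ey2 -catA in Ez1.
have [_ Ez6] := cat_inj (erefl (size (rev s))) Ez1.
have HL' : prefix (rev L) (y2 ++ [:: l]).
  apply: (@prefix_small _ _ _ (rev (mo z7))); last by rewrite size_cat size_rev /=; lia.
  by apply/prefixP; exists (rev (sigma e1 ++ pre)); rewrite -catA /= Ez6 rev_cat.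
exists a, b; split.
- apply: (@lang_factor _ _ z7 _ (e :: z6)).
  move: Le2; rewrite EZ12.
  by rewrite -!cats1 -!catA /= -!catA.
- by rewrite /suffix Ea rev_cons -cats1 Ey2 rev_cat -catA prefix_catr // eqxx HL'.
- by rewrite Eb -cats1 /= eqxx /= Ey' -!catA prefix_catr // eqxx HR'.
Qed.

Lemma min_size (P : seq B -> Prop) : (exists t, P t) ->
  exists t, P t /\ forall t', P t' -> (size t <= size t')%N.
Proof.
case=> t0 Pt0.
suff H : forall n t, (size t <= n)%N -> P t ->
  exists t, P t /\ forall t', P t' -> (size t <= size t')%N by exact: H _ _ (leqnn _) Pt0.
elim=> [|n IH] t Ht Pt.
  exists t; split=> // t' _; by move: Ht; rewrite leqn0 => /eqP ->.
case: (classic (exists t', P t' /\ (size t' < size t)%N)) => [[t' [Pt' Ht']]|Hno].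
  by apply: (IH t') => //; lia.
exists t; split=> // t' Pt'; rewrite leqNgt; apply/negP => Hlt; apply: Hno; by exists t'.
Qed.

Lemma suffix_l_eq a t : suffix t (sigma a) -> l \in t -> t = sigma a.
Proof.
have [ta [Ea Hta]] := sig_shape a; rewrite Ea => /suffixP [[|c r] //=].
case=> _ Eta Hin; by rewrite Eta mem_cat Hin orbT in Hta.
Qed.

Lemma l_in_sig a : l \in sigma a.
Proof. by have [ta [-> _]] := sig_shape a; rewrite inE eqxx. Qed.

Lemma Tm_nol v s : Tm X sigma v s -> l \notin s.
Proof.
case=> a1 [a2 [Hne [_ [_ ->]]]]; apply/negP => Hin.
have E1 := suffix_l_eq (lcs_suffixl (sigma a1) (sigma a2)) Hin.
have E2 := suffix_l_eq (lcs_suffixr (sigma a1) (sigma a2)) Hin.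
by move: Hne; rewrite (sig_inj (etrans (esym E1) E2)) eqxx.
Qed.

Lemma Tp_shape v p : Tp X sigma v p -> exists p', p = l :: p' /\ l \notin p'.
Proof.
case=> b1 [b2 [_ [_ [_ ->]]]].
have [t1 [-> H1]] := sig_shape b1; have [t2 [-> _]] := sig_shape b2.
rewrite /= eqxx; exists (lcp t1 t2); split=> //.
apply/negP => Hin; have /prefixP [r Er] := lcp_prefixl t1 t2.
by rewrite Er mem_cat Hin in H1.
Qed.

Lemma proper_suffix_size (s t : seq B) : proper_suffix s t -> (size s < size t)%N.
Proof. by move/proper_suffixE => [r [c ->]]; rewrite size_cat /=; lia. Qed.

Lemma proper_prefix_size (s t : seq B) : proper_prefix s t -> (size s < size t)%N.
Proof. by move/proper_prefixE => [c [r ->]]; rewrite size_cat /=; lia. Qed.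

Lemma sfx_proper s a : suffix s (sigma a) -> l \notin s -> proper_suffix s (sigma a).
Proof.
move=> Hs Hl; rewrite /proper_suffix Hs /=; apply/negP => /eqP E.
by move: Hl; rewrite E l_in_sig.
Qed.

Definition phiL (s : seq B) a := nth l (rev (sigma a)) (size s).
Definition phiR (p : seq B) b := nth l (rcons (sigma b) l) (size p).

Lemma phiL_eq s a c : suffix (c :: s) (sigma a) -> phiL s a = c.
Proof.
rewrite /phiL; move/suffixP => [r ->]; rewrite rev_cat rev_cons -cats1 -catA nth_cat size_rev.
by rewrite ltnn subnn.
Qed.

Lemma phiR_eq p b d : prefix (p ++ [:: d]) (rcons (sigma b) l) -> phiR p b = d.
Proof.
rewrite /phiR; move/prefixP => [r Er]; rewrite Er -catA nth_cat ltnn subnn.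
by [].
Qed.

Lemma phiL_spec s a : suffix s (sigma a) -> l \notin s -> suffix (phiL s a :: s) (sigma a).
Proof.
move=> Hs Hl; have Hp : proper_suffix s (sigma a).
  rewrite /proper_suffix Hs /=; apply/negP => /eqP E.
  by move: Hl; rewrite E l_in_sig.
have [r [c Er]] := proper_suffixE Hp.
have Hc : suffix (c :: s) (sigma a) by rewrite Er suffix_suffix.
by rewrite (phiL_eq Hc).
Qed.

Lemma prefix_rcons_proper p' b : l \notin p' -> prefix (l :: p') (rcons (sigma b) l) ->
  proper_prefix (l :: p') (rcons (sigma b) l).
Proof.
move=> Hl Hp; rewrite /proper_prefix Hp /=; apply/negP => /eqP E.
have [tb [Eb _]] := sig_shape b.
move: E; rewrite Eb /= => [[E]].
by move: Hl; rewrite E mem_rcons inE eqxx.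
Qed.

Lemma phiR_spec p' b : l \notin p' -> prefix (l :: p') (rcons (sigma b) l) ->
  prefix ((l :: p') ++ [:: phiR (l :: p') b]) (rcons (sigma b) l).
Proof.
move=> Hl Hp; have [c [r Er]] := proper_prefixE (prefix_rcons_proper Hl Hp).
have Hc : prefix ((l :: p') ++ [:: c]) (rcons (sigma b) l) by rewrite Er -[c :: r]cat1s catA prefix_prefix.
by rewrite (phiR_eq Hc).
Qed.

Lemma prefix_of_sig p' b : l \notin p' -> prefix (l :: p') (rcons (sigma b) l) ->
  prefix (l :: p') (sigma b).
Proof.
move=> Hl Hp; have H := proper_prefix_size (prefix_rcons_proper Hl Hp).
move: Hp; rewrite -cats1 => Hp; apply: prefix_small Hp _.
by move: H; rewrite size_rcons.
Qed.

Lemma edge_img (v : seq A) (s p' : seq B) (a b : A) : l \notin s -> l \notin p' ->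
  Exy X sigma l v s (l :: p') a b ->
  Eext (imageY X sigma) (s ++ mo v ++ (l :: p')) (phiL s a) (phiR (l :: p') b).
Proof.
move=> Hs Hp [Hab [_ Hsa] [_ Hpb]].
have [e Le] := lang_extR Hab.
have /langC := Le.
have /suffixP [q Eq] := phiL_spec Hsa Hs.
have /prefixP [r Er] := phiR_spec Hp Hpb.
have [te [Ee _]] := sig_shape e.
set c := phiL s a in Eq *; set d := phiR (l :: p') b in Er *.
have Eb : sigma b ++ sigma e = ((l :: p') ++ [:: d]) ++ r ++ te.
  by rewrite Ee -[l :: te]cat1s catA cats1 Er -!catA.
rewrite morph_rcons morph_cons morph_rcons Eq -!catA Eb => H.
rewrite /Eext; apply: (@lang_factor _ _ q _ (r ++ te)).
by move: H; rewrite -!cats1 /= -!catA.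
Qed.

Lemma part1 (v : seq A) (s p : seq B) : Tm X sigma v s -> Tp X sigma v p ->
  phi_spec X sigma l v s p (phiL s) (phiR p) /\
  image_graph X sigma l v s p (phiL s) (phiR p) (s ++ mo v ++ p).
Proof.
move=> HTm HTp; have Hs := Tm_nol HTm; have [p' [Ep Hp]] := Tp_shape HTp; subst p.
split; first split.
- move=> a [b [_ [Ema Hsa] _]].
  have [t [[Tt Pt St] Mt]] := @min_size
     (fun t => [/\ Tbm X sigma v t, proper_suffix s t & suffix t (sigma a)]) (ex_intro _ (sigma a) (And3
       (or_intror (ex_intro _ a (conj Ema erefl)))
       (sfx_proper Hsa Hs)
       (suffix_refl _))).
  exists t; split; last by [].
  split=> // [[t' [Tt' Pt' Pt't]]].
  have := Mt t' (And3 Tt' Pt' (suffix_trans (proj1 (andP Pt't)) St)).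
  by have := proper_suffix_size Pt't; lia.
- move=> s' a [_ Ps' _] [_ Ss'a] _.
  have [r [c Er]] := proper_suffixE Ps'.
  have Hc : suffix (c :: s) s' by rewrite Er suffix_suffix.
  by rewrite (phiL_eq (suffix_trans Hc Ss'a)).
- move=> b [a [_ _ [Epb Hpb]]].
  have Hpr := prefix_rcons_proper Hp Hpb.
  have [t [[Tt Pt St] Mt]] := @min_size
     (fun t => [/\ Tbp X sigma l v t, proper_prefix (l :: p') t & prefix t (rcons (sigma b) l)])
     (ex_intro _ (rcons (sigma b) l) (And3
       (or_intror (ex_intro _ b (conj Epb erefl))) Hpr (prefix_refl _))).
  exists t; split; last by [].
  split=> // [[t' [Tt' Pt' Pt't]]].
  have := Mt t' (And3 Tt' Pt' (prefix_trans (proj1 (andP Pt't)) St)).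
  by have := proper_prefix_size Pt't; lia.
- move=> p'' b [_ Pp'' _] [_ Pb] _.
  have [c [r Er]] := proper_prefixE Pp''.
  have Hc : prefix ((l :: p') ++ [:: c]) p'' by rewrite Er -[c :: r]cat1s catA prefix_prefix.
  by rewrite (phiR_eq (prefix_trans Hc Pb)) -cats1.
split.
- move=> c; split.
    move=> H.
    have H' : lang (imageY X sigma) ([:: c] ++ s ++ mo v ++ (l :: p') ++ [::]) by rewrite cats0.
    have [a [b [Hab Hsa Hpb]]] := parse (isT : (size [:: c] <= 1)%N) (isT : (size [::] <= 1)%N) Hs Hp H'.
    exists a; split; last exact: phiL_eq.
    exists b; split=> //.
      split; first by apply: (@lang_factor _ _ [::] _ [:: b]); rewrite /= cats1.
      exact: suffix_trans (suffix_cons _ _) Hsa.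
    split; first by apply: (@lang_factor _ _ [:: a] _ [::]); rewrite /= cats0.
    by rewrite cats0 in Hpb.
  move=> [a [[b Hab] <-]].
  have := edge_img Hs Hp Hab; rewrite /Eext /Em => H.
  by apply: (@lang_factor _ _ [::] _ [:: phiR (l :: p') b]); rewrite /= cats1.
- move=> d; split.
    move=> H.
    have H' : lang (imageY X sigma) ([::] ++ s ++ mo v ++ (l :: p') ++ [:: d]).
      by move: H; rewrite /Ep -cats1 -!catA.
    have [a [b [Hab Hsa Hpb]]] := parse (isT : (size [::] <= 1)%N) (isT : (size [:: d] <= 1)%N) Hs Hp H'.
    exists b; split; last exact: phiR_eq.
    exists a; split=> //.
      by split; first by apply: (@lang_factor _ _ [::] _ [:: b]); rewrite /= cats1.
    split; first by apply: (@lang_factor _ _ [:: a] _ [::]); rewrite /= cats0.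
    exact: catl_prefix Hpb.
  move=> [b [[a Hab] <-]].
  have := edge_img Hs Hp Hab; rewrite /Eext /Ep => H.
  by apply: (@lang_factor _ _ [:: phiL s a] _ [::]); rewrite /= cats0.
- move=> c d; split.
    move=> H.
    have H' : lang (imageY X sigma) ([:: c] ++ s ++ mo v ++ (l :: p') ++ [:: d]).
      by move: H; rewrite /Eext -cats1 -!catA.
    have [a [b [Hab Hsa Hpb]]] := parse (isT : (size [:: c] <= 1)%N) (isT : (size [:: d] <= 1)%N) Hs Hp H'.
    exists a, b; split; last exact: phiR_eq; last exact: phiL_eq.
    split=> //.
      split; first by apply: (@lang_factor _ _ [::] _ [:: b]); rewrite /= cats1.
      exact: suffix_trans (suffix_cons _ _) Hsa.
    split; first by apply: (@lang_factor _ _ [:: a] _ [::]); rewrite /= cats0.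
    exact: catl_prefix Hpb.
  move=> [a [b [Hab <- <-]]]; exact: edge_img.
Qed.

Lemma Em_of_Eext v a b : Eext X v a b -> Em X v a.
Proof. by move=> H; apply: (@lang_factor _ _ [::] _ [:: b]); rewrite /= cats1. Qed.

Lemma Ep_of_Eext v a b : Eext X v a b -> Ep X v b.
Proof. by move=> H; apply: (@lang_factor _ _ [:: a] _ [::]); rewrite /= cats0. Qed.

Lemma suffix_eq_size (x y : seq B) : suffix x y -> size x = size y -> x = y.
Proof. by move=> H Hs; move: H; rewrite suffixE Hs subnn drop0 => /eqP. Qed.

Lemma prefix_eq_size (x y : seq B) : prefix x y -> size x = size y -> x = y.
Proof. by move=> H Hs; move: H; rewrite prefixE Hs take_size => /eqP. Qed.

Lemma lcp_rcons (t1 t2 : seq B) : l \notin t1 -> l \notin t2 -> t1 <> t2 ->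
  lcp (rcons t1 l) (rcons t2 l) = lcp t1 t2.
Proof.
elim: t1 t2 => [|c1 t1 IH] [|c2 t2] //=.
- by move=> _; rewrite inE negb_or => /andP [/negbTE -> _].
- by rewrite inE negb_or eq_sym => /andP [/negbTE -> _].
rewrite !inE !negb_or => /andP [_ H1] /andP [_ H2] Hne.
case: eqP => // E; subst c2; rewrite IH //; move=> E; apply: Hne; by rewrite E.
Qed.

Lemma p_shape (p : seq B) b : p != [::] -> prefix p (sigma b) ->
  exists p', p = l :: p' /\ l \notin p'.
Proof.
have [tb [Etb Htb]] := sig_shape b; rewrite Etb.
case: p => [|c p'] // _ /= /andP [/eqP -> Hpre]; exists p'; split=> //.
by apply/negP => Hin; move/prefixP: Hpre => [r Er]; rewrite Er mem_cat Hin in Htb.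
Qed.

Lemma part2 (v : seq A) (s0 p0 : seq B) : bispecial X v ->
  (forall s, Tm X sigma v s <-> s = s0) ->
  (forall p, Tp X sigma v p <-> p = p0) ->
  [/\ ext_image_of X sigma v (s0 ++ mo v ++ p0),
      bispecial (imageY X sigma) (s0 ++ mo v ++ p0),
      (forall u, ext_image_of X sigma v u -> bispecial (imageY X sigma) u ->
         u = s0 ++ mo v ++ p0)
    & exists phiL phiR : A -> B,
        phi_spec X sigma l v s0 p0 phiL phiR /\
        graph_iso X sigma l v s0 p0 phiL phiR (s0 ++ mo v ++ p0)].
Proof.
move=> [Lv [a1 [a2 [Ha12 [Ea1 Ea2]]]] [b1 [b2 [Hb12 [Eb1 Eb2]]]]] HTm HTp.
have lcs_s0 : forall a a', a != a' -> Em X v a -> Em X v a' -> lcs (sigma a) (sigma a') = s0.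
  move=> a a' Hne Ea Ea'; apply/HTm; exists a, a'; by [].
have lcp_p0 : forall b b', b != b' -> Ep X v b -> Ep X v b' -> lcp (sigma b) (sigma b') = p0.
  move=> b b' Hne Eb Eb'; apply/HTp; exists b, b'; by [].
have HTs0 : Tm X sigma v s0 by apply/HTm.
have HTp0 : Tp X sigma v p0 by apply/HTp.
have Hs0 := Tm_nol HTs0; have [p0' [Ep0 Hp0']] := Tp_shape HTp0.
have s0_suf : forall a, Em X v a -> suffix s0 (sigma a).
  move=> a Ea; case: (eqVneq a a1) => [->|Hne].
    by rewrite -(lcs_s0 _ _ Ha12 Ea1 Ea2) lcs_suffixl.
  by rewrite -(lcs_s0 _ _ Hne Ea Ea1) lcs_suffixl.
have p0_pre : forall b, Ep X v b -> prefix p0 (sigma b).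
  move=> b Eb; case: (eqVneq b b1) => [->|Hne].
    by rewrite -(lcp_p0 _ _ Hb12 Eb1 Eb2) lcp_prefixl.
  by rewrite -(lcp_p0 _ _ Hne Eb Eb1) lcp_prefixl.
have leftV_all : forall a, Em X v a -> leftV X sigma l v s0 p0 a.
  move=> a Ea; have [b Hb] := lang_extR Ea; exists b; split.
  - exact: Hb.
  - by split=> //; apply: s0_suf.
  - have Eb : Ep X v b by apply: (Ep_of_Eext Hb).
    by split=> //; rewrite -cats1 prefix_catl // p0_pre.
have rightV_all : forall b, Ep X v b -> rightV X sigma l v s0 p0 b.
  move=> b Eb; have [a Ha] := lang_extL Eb; exists a; split.
  - exact: Ha.
  - by split; [apply: (Em_of_Eext Ha) | apply: s0_suf; apply: (Em_of_Eext Ha)].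
  - by split=> //; rewrite -cats1 prefix_catl // p0_pre.
have injL : forall a a', Em X v a -> Em X v a' -> phiL s0 a = phiL s0 a' -> a = a'.
  move=> a a' Ea Ea' E; case: (eqVneq a a') => // Hne; exfalso.
  have H1 := phiL_spec (s0_suf _ Ea) Hs0; have H2 := phiL_spec (s0_suf _ Ea') Hs0.
  rewrite E in H1; exact: lcs_nomore H1 H2 (lcs_s0 _ _ Hne Ea Ea').
have injR : forall b b', Ep X v b -> Ep X v b' -> phiR p0 b = phiR p0 b' -> b = b'.
  move=> b b' Eb Eb' E; case: (eqVneq b b') => // Hne; exfalso.
  have Hpb : prefix (l :: p0') (rcons (sigma b) l) by rewrite -Ep0 -cats1 prefix_catl // p0_pre.
  have Hpb' : prefix (l :: p0') (rcons (sigma b') l) by rewrite -Ep0 -cats1 prefix_catl // p0_pre.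
  have H1 := phiR_spec Hp0' Hpb; have H2 := phiR_spec Hp0' Hpb'.
  rewrite -Ep0 E in H1; rewrite -Ep0 in H2.
  apply: (lcp_nomore H1 H2).
  have [tb [Etb Htb]] := sig_shape b; have [tb' [Etb' Htb']] := sig_shape b'.
  rewrite -(lcp_p0 _ _ Hne Eb Eb') Etb Etb' /= eqxx lcp_rcons //.
  by move=> Et; move: Hne; rewrite (sig_inj (etrans Etb (etrans (congr1 _ Et) (esym Etb')))) eqxx.
have [Hspec Himg] := part1 HTs0 HTp0.
have [HiL HiR HiE] := Himg.
have [b0 Hx] := leftV_all _ Ea1.
have Hu : lang (imageY X sigma) (s0 ++ mo v ++ p0).
  move: (Hx); rewrite Ep0 => Hx'; have H := edge_img Hs0 Hp0' Hx'.
  apply: (@lang_factor _ _ [:: phiL s0 a1] _ [:: phiR (l :: p0') b0]).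
  by move: H; rewrite /Eext -cats1.
split.
- split; first exact: Hu.
  exists s0, p0; split=> //.
  case: Hx => Hab _ _; exists a1, b0; split=> //.
  + exact: sfx_proper (s0_suf _ Ea1) Hs0.
  + by rewrite Ep0.
  + exact: p0_pre (Ep_of_Eext Hab).
- split=> //.
  + exists (phiL s0 a1), (phiL s0 a2); split.
      by apply/eqP => E; move: Ha12; rewrite (injL _ _ Ea1 Ea2 E) eqxx.
    split; apply/HiL; [exists a1 | exists a2]; split=> //; exact: leftV_all.
  + exists (phiR p0 b1), (phiR p0 b2); split.
      by apply/eqP => E; move: Hb12; rewrite (injR _ _ Eb1 Eb2 E) eqxx.
    split; apply/HiR; [exists b1 | exists b2]; split=> //; exact: rightV_all.
- move=> u [Lu [s [p [[a [b [Hab Psa Hpne Ppb]]] ->]]]]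
    [_ [c1 [c2 [Hc [Hc1 Hc2]]]] [d1 [d2 [Hd [Hd1 Hd2]]]]].
  have Ea := Em_of_Eext Hab; have Eb := Ep_of_Eext Hab.
  have Hs : l \notin s.
    apply/negP => Hin; move: Psa => /andP [Suf Hne].
    by rewrite (suffix_l_eq Suf Hin) eqxx in Hne.
  have [p' [Ep' Hp']] : exists p', p = l :: p' /\ l \notin p'.
    exact: p_shape Hpne Ppb.
  subst p.
  have parseL : forall c, Em (imageY X sigma) (s ++ mo v ++ l :: p') c ->
      exists a', Em X v a' /\ suffix (c :: s) (sigma a').
    move=> c Hc'.
    have H' : lang (imageY X sigma) ([:: c] ++ s ++ mo v ++ (l :: p') ++ [::]) by rewrite cats0.
    have [a' [b' [Hab' Hsa' _]]] :=
      parse (isT : (size [:: c] <= 1)%N) (isT : (size [::] <= 1)%N) Hs Hp' H'.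
    by exists a'; split; [exact: Em_of_Eext Hab' | exact: Hsa'].
  have parseR : forall d, Ep (imageY X sigma) (s ++ mo v ++ l :: p') d ->
      exists b', Ep X v b' /\ prefix ((l :: p') ++ [:: d]) (rcons (sigma b') l).
    move=> d Hd'.
    have H' : lang (imageY X sigma) ([::] ++ s ++ mo v ++ (l :: p') ++ [:: d]).
      by move: Hd'; rewrite /Ep -cats1 -!catA.
    have [a' [b' [Hab' _ Hpb']]] :=
      parse (isT : (size [::] <= 1)%N) (isT : (size [:: d] <= 1)%N) Hs Hp' H'.
    by exists b'; split; [exact: Ep_of_Eext Hab' | exact: Hpb'].
  have Es : s = s0.
    have S1 := s0_suf _ Ea; have S2 : suffix s (sigma a) by case/andP: Psa.
    have [a1' [Ea1' S1']] := parseL _ Hc1; have [a2' [Ea2' S2']] := parseL _ Hc2.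
    case: (ltngtP (size s) (size s0)) => Hsz.
    + exfalso.
      have T1 : suffix (c1 :: s) s0 := suffix_cmp S1' (s0_suf _ Ea1') Hsz.
      have T2 : suffix (c2 :: s) s0 := suffix_cmp S2' (s0_suf _ Ea2') Hsz.
      have [E _] : c1 = c2 /\ s = s.
        by case: (suffix_eq_size (suffix_cmp T1 T2 (leqnn _)) (erefl _)).
      by move: Hc; rewrite E eqxx.
    + exfalso.
      have ea : forall a' c, Em X v a' -> suffix (c :: s) (sigma a') -> a' = a.
        move=> a' c Ea' Sa'; case: (eqVneq a' a) => // Hne.
        have := lcs_max (suffix_trans (suffix_cons _ _) Sa') S2.
        by rewrite (lcs_s0 _ _ Hne Ea' Ea) => /size_suffix; rewrite leqNgt Hsz.
      have e1 := ea _ _ Ea1' S1'; have e2 := ea _ _ Ea2' S2'; subst a1' a2'.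
      have [E _] : c1 = c2 /\ s = s.
        by case: (suffix_eq_size (suffix_cmp S1' S2' (leqnn _)) (erefl _)).
      by move: Hc; rewrite E eqxx.
    + exact: suffix_eq_size (suffix_cmp S2 S1 (eq_leq Hsz)) Hsz.
  have Ep' : l :: p' = p0.
    have P1 := p0_pre _ Eb; have P2 := Ppb.
    have [b1' [Eb1' Q1]] := parseR _ Hd1; have [b2' [Eb2' Q2]] := parseR _ Hd2.
    have fin : prefix ((l :: p') ++ [:: d1]) ((l :: p') ++ [:: d2]) -> False.
      move=> H; have := prefix_eq_size H; rewrite !size_cat => /(_ erefl).
      move/(cat_inj (erefl _)) => [_ [E]]; by move: Hd; rewrite E eqxx.
    case: (ltngtP (size (l :: p')) (size p0)) => Hsz.
    + exfalso.
      have R1 : prefix p0 (rcons (sigma b1') l) by rewrite -cats1 prefix_catl // p0_pre.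
      have R2 : prefix p0 (rcons (sigma b2') l) by rewrite -cats1 prefix_catl // p0_pre.
      have T1 := prefix_cmp Q1 R1 (_ : _); have T2 := prefix_cmp Q2 R2 (_ : _).
      apply: fin; apply: prefix_cmp (T1 _) (T2 _) _; try by rewrite size_cat addn1.
      by rewrite !size_cat.
    + exfalso.
      have eb : forall b' d, Ep X v b' -> prefix ((l :: p') ++ [:: d]) (rcons (sigma b') l) -> b' = b.
        move=> b' d Eb' Qb'; case: (eqVneq b' b) => // Hne.
        have := lcp_max (prefix_of_sig Hp' (catl_prefix Qb')) P2.
        by rewrite (lcp_p0 _ _ Hne Eb' Eb) => /size_prefix; rewrite leqNgt Hsz.
      have e1 := eb _ _ Eb1' Q1; have e2 := eb _ _ Eb2' Q2; subst b1' b2'.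
      apply: fin; apply: prefix_cmp Q1 Q2 _; by rewrite !size_cat.
    + exact: prefix_eq_size (prefix_cmp P2 P1 (eq_leq Hsz)) Hsz.
  by rewrite Es Ep'.
- exists (phiL s0), (phiR p0); split=> //; split=> //.
  + move=> x y [bx [Hx1 _ _]] [by' [Hy1 _ _]]; apply: injL.
      exact: Em_of_Eext Hx1.
    exact: Em_of_Eext Hy1.
  + move=> x y [ax [Hx1 _ _]] [ay [Hy1 _ _]]; apply: injR.
      exact: Ep_of_Eext Hx1.
    exact: Ep_of_Eext Hy1.
  + move=> a b [b' Hab'] [a' Ha'b] H.
    have [a'' [b'' [Hx'' Ea'' Eb'']]] := (HiE _ _).1 H.
    have Ema'' : Em X v a'' by case: Hx'' => H1 _ _; exact: Em_of_Eext H1.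
    have Epb'' : Ep X v b'' by case: Hx'' => H1 _ _; exact: Ep_of_Eext H1.
    have Ema : Em X v a by case: Hab' => H1 _ _; exact: Em_of_Eext H1.
    have Epb : Ep X v b by case: Ha'b => H1 _ _; exact: Ep_of_Eext H1.
    by rewrite -(injL _ _ Ema'' Ema Ea'') -(injR _ _ Epb'' Epb Eb'').
Qed.


End Sig.

Theorem proposition4p4 (A B : finType) (X : (int -> A) -> Prop)
    (sigma : A -> seq B) (l : B) (v : seq A) :
  shift_space X ->
  injective (morph sigma) ->
  strongly_left_proper sigma l ->
  bispecial X v ->
  (forall s p, Tm X sigma v s -> Tp X sigma v p -> is_ext_image X sigma v s p ->
     exists phiL phiR : A -> B,
       phi_spec X sigma l v s p phiL phiR /\
       image_graph X sigma l v s p phiL phiR (s ++ morph sigma v ++ p))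
  /\
  (forall s0 p0 : seq B,
     (forall s, Tm X sigma v s <-> s = s0) ->
     (forall p, Tp X sigma v p <-> p = p0) ->
     [/\ ext_image_of X sigma v (s0 ++ morph sigma v ++ p0),
         bispecial (imageY X sigma) (s0 ++ morph sigma v ++ p0),
         (forall u, ext_image_of X sigma v u -> bispecial (imageY X sigma) u ->
            u = s0 ++ morph sigma v ++ p0)
       & exists phiL phiR : A -> B,
           phi_spec X sigma l v s0 p0 phiL phiR /\
           graph_iso X sigma l v s0 p0 phiL phiR (s0 ++ morph sigma v ++ p0)]).
Proof.
move=> HX Hinj Hslp Hbis; split.
  move=> s p HTm HTp _.
  exists (phiL sigma l s), (phiR sigma l p).
  exact: (part1 HX Hinj Hslp HTm HTp).
move=> s0 p0 HTm HTp.
exact: (part2 HX Hinj Hslp Hbis HTm HTp).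
Qed.
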